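(* Let $F$ be an undirected forest on $n \geq 2$ vertices and let $k \geq 2$ be a natural number. Then $\psi_b(F,k) \geq \frac{n+3k-1}{2k}$. Moreover, this lower bound is tight (it is attained whenever the expression $\frac{n+3k-1}{2k}$ is an integer).
   Context: In an undirected forest, a leaf is a vertex of degree $1$, an isolated vertex is a vertex of degree $0$, and a branching vertex is a vertex of degree at least $3$. A set $P$ of vertices of $F$ is a branching $k$-path vertex cover of $F$ if every vertex of degree at most $1$ belongs to $P$ and every path on $k$ vertices (of length $k-1$) in $F$ contains a branching vertex or a vertex of $P$. The branching $k$-path vertex cover number $\psi_b(F,k)$ is the minimum size of a branching $k$-path vertex cover of $F$. *)

(* Defs.v *)
From mathcomp Require Import all_boot.
Set Implicit Arguments. Unset Strict Implicit. Unset Printing Implicit Defensive.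

Section Forest.
Variable T : finType.
Variable e : rel T.

Definition simple_graph : Prop := symmetric e /\ irreflexive e.

Definition acyclic : Prop :=
  forall s : seq T, uniq s -> 3 <= size s -> ~~ cycle e s.

Definition forest : Prop := simple_graph /\ acyclic.

Definition deg (x : T) : nat := #|[set y | e x y]|.

Definition kpath (k : nat) (s : k.-tuple T) : bool := uniq s && sorted e s.

Definition bkpvc (k : nat) (P : {set T}) : bool :=
  [forall x, (deg x <= 1) ==> (x \in P)] &&
  [forall s : k.-tuple T, kpath s ==> has (fun v => (2 < deg v) || (v \in P)) s].

(* psi_b(F,k): minimum size of a branching k-path vertex cover
   (setT is always one when k >= 1) *)
Definition psi_b (k : nat) : nat :=
  #|[arg min_(P < [set: T] | bkpvc k P) #|P|]|.
End Forest.

(* Main.v *)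
Require Import Defs.
From mathcomp Require Import all_boot zify.
Set Implicit Arguments. Unset Strict Implicit. Unset Printing Implicit Defensive.

Lemma arith1 (SX y p be i0 n a bs k K: nat) :
 2 * y <= k.-1 * SX ->
 SX = a + bs -> n = p + be + y -> 3 * be <= bs -> p <= a + i0 -> i0 <= n -> 2 <= n -> 2 <= k ->
 SX + 2 * y + 2 <= 2 * (n - i0) -> K = k.-1 ->
 n + 3 * k - 1 <= 2 * k * p.
Proof.
move=> HSX HSXs HN Hb3 HPa HIT HT Hk HF HK.
rewrite -HK in HSX.
have Hk1 : k = K.+1 by lia.
have Hsx2 : SX <= 2 * (p + be) - 2 * i0 - 2 by lia.
have Hbe : be + i0 + 2 <= p by lia.
set W := 2 * p - 2 * i0 - 3.
have Hm : K * SX <= K * (2 * W).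
  apply: leq_mul => //; rewrite /W; lia.
have Hm2 : K * W + K * (2 * i0 + 3) = K * (2 * p).
  rewrite -mulnDr; congr (_ * _); rewrite /W; lia.
have Hy : y <= K * W.
  move: Hm; rewrite mulnCA => Hm. lia.
have E : 2 * k * p = 2 * (K * p) + 2 * p by rewrite Hk1 mulnS mulSn; lia.
rewrite E. move: Hm2; rewrite mulnDr mulnCA. lia.
Qed.

Section Gen.
Variable T : finType.
Variable e : rel T.
Hypothesis esym : symmetric e.
Hypothesis eirr : irreflexive e.
Hypothesis eacy : acyclic e.

Definition degS (S : {set T}) x := #|[set y in S | e x y]|.

Definition inS (S : {set T}) := fun z : T => z \in S.

Definition nonext (S : {set T}) a t :=
  forall y, y \in S -> y \notin a :: t -> ~~ e (last a t) y && ~~ e y a.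

Lemma maxpath_aux S m : forall a t, #|T| - size (a :: t) = m ->
  uniq (a :: t) -> path e a t -> all (inS S) (a :: t) ->
  exists a' t', [/\ uniq (a' :: t'), path e a' t', all (inS S) (a' :: t') & nonext S a' t'].
Proof.
elim: m => [|m IH] a t Hm Hu Hp Ha.
- exists a, t; split => // y yS yn.
  have : #|a :: y :: t| <= #|T| by apply: max_card.
  have -> : #|a :: y :: t| = size (a :: y :: t).
    apply/card_uniqP. move: Hu yn; rewrite /= !inE negb_or => /andP[an ut] /andP[ya yt].
    by rewrite negb_or eq_sym ya an yt ut.
  move: Hm => /=; lia.
- case: (boolP [exists y, [&& y \in S, y \notin a :: t & e (last a t) y]]).
  + move=> /existsP[y /and3P[yS yn ey]].
    apply: (IH a (rcons t y)).
    * rewrite /= size_rcons. move: Hm => /=; lia.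
    * by rewrite -rcons_cons rcons_uniq yn.
    * by rewrite rcons_path Hp ey.
    * by rewrite -rcons_cons all_rcons /inS yS.
  + move=> /existsPn Hn1.
  case: (boolP [exists y, [&& y \in S, y \notin a :: t & e y a]]).
  + move=> /existsP[y /and3P[yS yn ey]].
    apply: (IH y (a :: t)).
    * rewrite /=. move: Hm => /=; lia.
    * by rewrite cons_uniq yn Hu.
    * by rewrite /= ey.
    * by rewrite /= /inS yS.
  + move=> /existsPn Hn2.
    exists a, t; split => // y yS yn.
    move: (Hn1 y) (Hn2 y); rewrite yS yn /= => -> ->; done.
Qed.

Lemma maxpath (S : {set T}) x0 : x0 \in S ->
  exists a t, [/\ uniq (a :: t), path e a t, all (inS S) (a :: t) & nonext S a t].
Proof.
move=> xS; apply: (@maxpath_aux S _ x0 [::] (erefl _)) => //=. by rewrite andbT.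
Qed.


Lemma split_mem (s : seq T) y : y \in s -> exists p1 p2, s = p1 ++ y :: p2.
Proof. by case/splitPr => p1 p2; exists p1, p2. Qed.

Lemma nbr_end (S : {set T}) a t y :
  uniq (a :: t) -> path e a t -> nonext S a t -> y \in S -> e (last a t) y ->
  exists p, a :: t = rcons (rcons p y) (last a t).
Proof.
move=> Hu Hp Hn yS ey.
have yin : y \in a :: t.
  apply/negPn/negP => yn; move: (Hn y yS yn); by rewrite ey.
have Hl : last a t = last a (a :: t) by [].
have Hs : sorted e (a :: t) by [].
case: (split_mem yin) => p1 [p2 Heq0].
have Heq : @cons T a t = p1 ++ y :: p2 by exact: Heq0.
rewrite Hl Heq last_cat /=.
change (is_true (e (last a (a :: t)) y)) in ey. rewrite Heq last_cat /= in ey.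
move: Hs Hu; rewrite Heq sorted_cat_cons cat_uniq => /andP[_ Hp2] /and3P[_ _ Hu2].
clear Heq0. case: p2 Heq ey Hp2 Hu2 => [|z [|w r]] Heq ey Hp2 Hu2 /=.
- by rewrite eirr in ey.
- by exists p1; rewrite -!cats1 -catA.
- exfalso. have := eacy Hu2 isT.
  rewrite /cycle rcons_path Hp2 /=. by rewrite ey.
Qed.


Lemma leaf (S : {set T}) : S != set0 -> exists2 x, x \in S & degS S x <= 1.
Proof.
case/set0Pn => x0 xS. case: (maxpath xS) => a [t [Hu Hp Ha Hn]].
exists (last a t).
- have := mem_last a t. move: Ha => /allP H /H. by [].
- apply/card_le1_eqP => y z; rewrite !inE => /andP[yS ey] /andP[zS ez].
  case: (nbr_end Hu Hp Hn yS ey) => p1 H1; case: (nbr_end Hu Hp Hn zS ez) => p2 H2.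
  rewrite H1 in H2. case/rcons_inj: H2 => /rcons_inj. by case.
Qed.

Lemma sum_bool (A : {set T}) (P : pred T) :
  \sum_(u in A) (P u : nat) = #|[set u in A | P u]|.
Proof.
rewrite -sum1dep_card big_mkcond [RHS]big_mkcond; apply eq_bigr => u _.
by case: (u \in A); case: (P u).
Qed.

Lemma degS_sub (A B : {set T}) x : A \subset B -> degS A x <= degS B x.
Proof.
move=> sAB; apply: subset_leq_card; apply/subsetP => y; rewrite !inE => /andP[yA ->].
by rewrite (subsetP sAB y yA).
Qed.

Lemma sumdeg_bound_aux n (S : {set T}) : #|S| <= n -> S != set0 ->
  \sum_(x in S) degS S x + 2 <= 2 * #|S|.
Proof.
elim: n S => [|n IH] S Hn Sn.
- by move: Hn; rewrite leqn0 cards_eq0 (negbTE Sn).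
case: (leaf Sn) => x xS dx.
set S' := S :\ x.
have HS : #|S| = #|S'| + 1 by rewrite (cardsD1 x S) xS addnC.
have Hd : forall u, u \in S' -> degS S u = degS S' u + e u x.
  move=> u uS'. rewrite /degS (cardsD1 x [set y in S | e u y]) inE xS /= addnC.
  congr (_ + _); apply: eq_card => y; rewrite !inE.
  by case: (y == x); case: (y \in S); case: (e u y).
rewrite (big_setD1 x xS) /=.
rewrite (eq_bigr (fun u => degS S' u + e u x)); last by move=> u; apply: Hd.
rewrite big_split /= sum_bool.
have Hc : #|[set u in S' | e u x]| <= degS S x.
  apply: subset_leq_card; apply/subsetP => y; rewrite !inE => /andP[yS eyx]. by move: yS => /andP[_ ->]; rewrite esym.
rewrite -/S'.
have Hdx : degS S x <= #|S'|.
  apply: subset_leq_card; apply/subsetP => y; rewrite !inE => /andP[yS exy].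
  rewrite yS andbT; apply/eqP => yx; by rewrite yx eirr in exy.
case: (boolP (S' == set0)) => HS'.
- have H0 : \sum_(i in S') degS S' i = 0 by rewrite (eqP HS') big_set0.
  have H1 : #|[set u in S' | e u x]| = 0.
    by apply/eqP; rewrite cards_eq0; apply/eqP/setP => u; rewrite (eqP HS') !inE.
  rewrite H0 H1. move: Hdx; rewrite (eqP HS') cards0. lia.
- have H1 : #|S'| <= n by move: Hn; rewrite HS; lia.
  have H2 := IH S' H1 HS'. lia.
Qed.

Lemma sumdeg_bound (S : {set T}) : S != set0 ->
  \sum_(x in S) degS S x + 2 <= 2 * #|S|.
Proof. exact: (@sumdeg_bound_aux #|S|). Qed.


Lemma sorted_rcons2 (p : seq T) v u : sorted e (rcons (rcons p v) u) -> e v u.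
Proof.
case: p => [|c p] /=; first by rewrite andbT.
by rewrite rcons_path last_rcons => /andP[_ ->].
Qed.

Lemma card3 (v w z : T) : v != w -> v != z -> w != z -> #|(v |: (w |: [set z]))| = 3.
Proof.
move=> vw vz wz. rewrite !cardsU1 cards1 !inE negb_or vw vz wz. done.
Qed.

Lemma noedge (Y : {set T}) a t u z :
  uniq (a :: t) -> path e a t -> all (inS Y) (a :: t) -> nonext Y a t ->
  (forall y, y \in Y -> degS Y y <= 2) ->
  u \in a :: t -> z \in Y -> z \notin a :: t -> ~~ e u z.
Proof.
move=> Hu Hp Ha Hn Hd uin zY zn; apply/negP => euz.
case: (split_mem uin) => p1 [p2 Heq0].
have Heq : @cons T a t = p1 ++ u :: p2 by exact: Heq0.
clear Heq0.
case: p2 Heq => [|w p2] Heq.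
- have Hl : last a t = u.
    change (last a (a :: t) = u). by rewrite Heq last_cat.
  by move: (Hn z zY zn); rewrite Hl euz.
case/lastP: p1 Heq => [|p1 v] Heq.
- move: Heq => [Ha' _]. by move: (Hn z zY zn); rewrite Ha' [e z u]esym euz andbF.
have Hs : sorted e (a :: t) by [].
move: Hs; rewrite Heq sorted_cat_cons => /andP[/sorted_rcons2 evu /= /andP[euw _]].
have Hu' := Hu; rewrite Heq cat_uniq in Hu'.
move: Hu' => /and3P[_ Hdis _].
have vw : v != w.
  apply/eqP => vw; move: Hdis; rewrite vw => /hasPn /(_ w).
  by rewrite !inE mem_rcons inE eqxx orbT /= => /(_ isT).
have vin : v \in a :: t by rewrite Heq mem_cat mem_rcons inE eqxx.
have win : w \in a :: t by rewrite Heq mem_cat !inE eqxx !orbT.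
have vz : v != z by apply/eqP => vz; rewrite -vz vin in zn.
have wz : w != z by apply/eqP => wz; rewrite -wz win in zn.
have uY : u \in Y by move: Ha => /allP /(_ u uin).
have vY : v \in Y by move: Ha => /allP /(_ v vin).
have wY : w \in Y by move: Ha => /allP /(_ w win).
have := Hd u uY.
have : #|(v |: (w |: [set z]))| <= degS Y u.
  apply: subset_leq_card; apply/subsetP => y; rewrite !inE.
  case/or3P => /eqP ->.
  - by rewrite vY esym evu.
  - by rewrite wY euw.
  - by rewrite zY euz.
move=> H3 H2; have := leq_trans H3 H2. by rewrite card3.
Qed.


Lemma lemY_aux k n (Y : {set T}) : #|Y| <= n ->
  (forall y, y \in Y -> degS Y y <= 2) ->
  (forall s, uniq s -> sorted e s -> all (inS Y) s -> size s < k) ->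
  2 * #|Y| + k.-1 * \sum_(y in Y) degS Y y <= k.-1 * (2 * #|Y|).
Proof.
elim: n Y => [|n IH] Y Hn Hd Hk.
- have Y0 : Y = set0 by apply/eqP; rewrite -cards_eq0; move: Hn; rewrite leqn0.
  by rewrite Y0 big_set0 cards0.
case: (boolP (Y == set0)) => Y0.
- by rewrite (eqP Y0) big_set0 cards0.
case/set0Pn: Y0 => y0 y0Y.
case: (maxpath y0Y) => a [t [Hu Hp Ha Hne]].
set Q := [set z in a :: t].
have HQ : #|Q| = size (a :: t) by rewrite cardsE; apply/card_uniqP.
have Hqk : #|Q| < k by rewrite HQ; apply: Hk.
have QY : Q \subset Y.
  by apply/subsetP => z; rewrite inE => zin; move: Ha => /allP /(_ z zin).
have Qn : Q != set0 by apply/set0Pn; exists a; rewrite inE mem_head.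
have NE := noedge Hu Hp Ha Hne Hd.
have HdQ : forall u, u \in Q -> degS Y u = degS Q u.
  move=> u; rewrite inE => uin; apply: eq_card => y; rewrite !in_set.
  case: (boolP (y \in a :: t)) => yin.
  - by move: Ha => /allP /(_ y yin); rewrite /inS => ->.
  case: (boolP (y \in Y)) => yY //=.
  by rewrite (negbTE (NE u y uin yY yin)).
have HdR : forall u, u \in Y :\: Q -> degS Y u = degS (Y :\: Q) u.
  move=> u; rewrite !in_set => /andP[uin uY]; apply: eq_card => y; rewrite !in_set.
  case: (boolP (y \in a :: t)) => yin //=.
  by rewrite esym (negbTE (NE y u yin uY uin)) andbF.
rewrite (big_setID Q) /= (setIidPr QY).
rewrite (eq_bigr (fun u => degS Q u)); last by move=> u /HdQ.
rewrite [\sum_(i in Y :\: Q) _](eq_bigr (fun u => degS (Y :\: Q) u)); last by move=> u /HdR.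
have F := sumdeg_bound Qn.
have HC : #|Y| = #|Q| + #|Y :\: Q| by rewrite -(cardsID Q Y) (setIidPr QY).
have IH' := IH (Y :\: Q).
have H1 : #|Y :\: Q| <= n.
  move: Hn; rewrite HC. have : 0 < #|Q| by rewrite card_gt0. lia.
have H2 : forall y, y \in Y :\: Q -> degS (Y :\: Q) y <= 2.
  move=> y yR; rewrite -HdR //; apply: Hd; by move: yR; rewrite inE => /andP[_ ->].
have H3 : forall s, uniq s -> sorted e s -> all (inS (Y :\: Q)) s -> size s < k.
  move=> s us ss as_; apply: Hk => //; apply/allP => z zs.
  by move: as_ => /allP /(_ z zs); rewrite /inS inE => /andP[_ ->].
have IH2 := IH' H1 H2 H3.
rewrite HC.
move: F IH2 Hqk.
set q := #|Q|. set r := #|Y :\: Q|. set A := \sum_(i in Q) degS Q i.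
set B := \sum_(i in Y :\: Q) degS (Y :\: Q) i.
move=> F IH2 Hqk.
have E1 : k.-1 * (A + 2) <= k.-1 * (2 * q) by apply: leq_mul.
have E2 : 2 * q <= 2 * k.-1 by move: Hqk; lia.
rewrite mulnDr. nia.
Qed.


Lemma lemY k (Y : {set T}) :
  (forall y, y \in Y -> degS Y y <= 2) ->
  (forall s, uniq s -> sorted e s -> all (inS Y) s -> size s < k) ->
  2 * #|Y| + k.-1 * \sum_(y in Y) degS Y y <= k.-1 * (2 * #|Y|).
Proof. exact: (@lemY_aux k #|Y|). Qed.

Lemma dcount (A B : {set T}) : \sum_(y in A) degS B y = \sum_(x in B) degS A x.
Proof.
rewrite /degS.
under eq_bigr => y _ do rewrite -sum_bool.
under [RHS]eq_bigr => x _ do rewrite -sum_bool.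
rewrite exchange_big. apply: eq_bigr => x _; apply: eq_bigr => y _; by rewrite esym.
Qed.

Lemma deg_degS x : deg e x = degS [set: T] x.
Proof. by apply: eq_card => y; rewrite !inE. Qed.

Lemma degS_split (A : {set T}) x : degS A x + degS (~: A) x = deg e x.
Proof.
rewrite /deg -(cardsID A [set y | e x y]); congr (_ + _); apply: eq_card => y;
  rewrite !inE; by case: (e x y); case: (y \in A).
Qed.


Lemma part1_cover k (P : {set T}) : 2 <= #|T| -> 2 <= k -> bkpvc e k P ->
  #|T| + 3 * k - 1 <= 2 * k * #|P|.
Proof.
move=> HT Hk /andP[/forallP Hleaf /forallP Hpath].
set B := [set v | 2 < deg e v].
set X := P :|: B.
set Y := ~: X.
have HY2 : forall y, y \in Y -> deg e y = 2.
  move=> y; rewrite !inE negb_or => /andP[yP yB].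
  move: (Hleaf y); rewrite (negbTE yP) implybF -ltnNge => H1.
  move: yB; rewrite -leqNgt => H2. apply/eqP; rewrite eqn_leq H2 H1 //.
have HdY : forall y, y \in Y -> degS Y y <= 2.
  move=> y yY; rewrite -(HY2 y yY) deg_degS; apply: degS_sub; exact: subsetT.
have HkY : forall s, uniq s -> sorted e s -> all (inS Y) s -> size s < k.
  move=> s us ss aY; rewrite ltnNge; apply/negP => ks.
  have Hsz : size (take k s) == k by rewrite size_takel.
  move: (Hpath (Tuple Hsz)); rewrite /kpath /= take_uniq // take_sorted //= => /hasP[v vin].
  have vY : v \in Y by move: aY => /allP /(_ v (mem_take vin)).
  move: vY; rewrite !inE negb_or => /andP[/negbTE -> /negbTE ->]. done.
have LY := lemY HdY HkY.
set y := #|Y|. set SY := \sum_(v in Y) degS Y v.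
set SX := \sum_(v in X) deg e v.
have HSX1 : 2 * y <= SX + SY.
  have E1 : \sum_(v in Y) degS (~: Y) v + SY = 2 * y.
    rewrite /SY -big_split /= /y mulnC -sum_nat_const.
    apply: eq_bigr => v vY. by rewrite addnC degS_split HY2.
  have E2 : \sum_(v in Y) degS (~: Y) v <= SX.
    rewrite dcount setCK /SX; apply: leq_sum => v _; rewrite deg_degS; apply: degS_sub; exact: subsetT.
  rewrite -E1; lia.
have HSX : 2 * y <= k.-1 * SX.
  have : k.-1 * (2 * y) <= k.-1 * (SX + SY) by apply: leq_mul.
  rewrite mulnDr. lia.
set I := [set v | deg e v == 0].
have HN : #|T| = #|P| + #|B :\: P| + y.
  rewrite -(cardsC X) -/Y; congr (_ + _).
  rewrite -(cardsID P X); congr (_ + _); apply: eq_card => v; rewrite !inE;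
    case: (v \in P); rewrite /= ?andbF ?andbT //.
have HIP : I \subset P.
  apply/subsetP => v; rewrite inE => /eqP d0. move: (Hleaf v); by rewrite d0.
case: (boolP (~: I == set0)) => HI.
- have -> : P = [set: T].
    apply/setP => v; rewrite inE; apply: (subsetP HIP).
    apply/negPn/negP => vn; move: HI => /eqP /setP /(_ v). by move: vn; rewrite !inE => ->.
  rewrite cardsT. nia.
have HF := sumdeg_bound HI.
have HdI : forall v, degS (~: I) v = deg e v.
  move=> v; apply: eq_card => z; rewrite !inE.
  case: (boolP (e v z)) => evz; rewrite ?andbF ?andbT //.
  apply/negP => /eqP dz.
  have : 0 < deg e z by apply/card_gt0P; exists v; rewrite inE esym.
  by rewrite dz.
have Hsum : \sum_(v in ~: I) degS (~: I) v = SX + 2 * y.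
  under eq_bigr => v _ do rewrite HdI.
  have E1 : \sum_(v in ~: I) deg e v = \sum_(v in [set: T]) deg e v.
    rewrite (big_setID (A := [set: T]) I) /= [X in _ = X + _]big1 ?add0n.
    + by rewrite setTD.
    + by move=> v; rewrite !inE => /eqP.
  rewrite E1 (big_setID (A := [set: T]) Y) /= addnC setTD setTI -/X; congr (_ + _).
  + by rewrite /Y setCK.
  + rewrite /y mulnC -sum_nat_const; apply: eq_bigr => v vY; exact: HY2.
have HI0 : #|~: I| = #|T| - #|I| by rewrite cardsCs setCK.
have HIT : #|I| <= #|T| by apply: max_card.
have Hb3 : 3 * #|B :\: P| <= \sum_(v in B :\: P) deg e v.
  rewrite -sum1_card big_distrr /=; apply: leq_sum => v; rewrite !inE => /andP[_ Hv].
  by rewrite muln1.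
have HPa : #|P| <= \sum_(v in P) deg e v + #|I|.
  rewrite -sum1_card.
  have : \sum_(v in P) 1 <= \sum_(v in P) (deg e v + (v \in I)).
    apply: leq_sum => v _; rewrite inE; by case: (deg e v).
  rewrite big_split /= sum_bool => H.
  apply: (leq_trans H); rewrite leq_add2l; apply: subset_leq_card; apply/subsetP => v.
  by rewrite !inE => /andP[_ ->].
have HSXs : SX = \sum_(v in P) deg e v + \sum_(v in B :\: P) deg e v.
  rewrite /SX (big_setID (A := X) P) /=; congr (_ + _); apply: eq_bigl => v; rewrite !inE;
    case: (v \in P); rewrite /= ?andbF ?andbT //.
apply: (arith1 HSX HSXs HN Hb3 HPa HIT HT Hk _ (erefl _)).
by move: HF; rewrite Hsum HI0.
Qed.

End Gen.

Lemma bkpvcT (T : finType) (e : rel T) k : 0 < k -> bkpvc e k [set: T].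
Proof.
move=> k0; apply/andP; split; apply/forallP => x; first by rewrite inE implybT.
apply/implyP => _; apply/hasP; exists (tnth x (Ordinal k0)); first exact: mem_tnth.
by rewrite inE orbT.
Qed.

Lemma psi_spec (T : finType) (e : rel T) k : 0 < k ->
  (exists2 P, bkpvc e k P & psi_b e k = #|P|) /\
  (forall P, bkpvc e k P -> psi_b e k <= #|P|).
Proof.
move=> k0; rewrite /psi_b; case: arg_minnP => [|Q HQ Hmin]; first exact: bkpvcT.
split; first by exists Q.
by move=> P HP; apply: Hmin.
Qed.

Lemma part1 (T : finType) (e : rel T) (k : nat) :
  forest e -> 2 <= #|T| -> 2 <= k -> #|T| + 3 * k - 1 <= 2 * k * psi_b e k.
Proof.
move=> [[esym eirr] eacy] HT Hk.
have k0 : 0 < k by apply: leq_trans Hk.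
case: (psi_spec e k0) => [[P HP ->] _].
exact: (part1_cover esym eirr eacy HT Hk HP).
Qed.


Definition enat (par : nat -> nat) (x y : nat) : bool :=
  (0 < x) && (par x == y) || (0 < y) && (par y == x).

Lemma seq_max n (s : seq 'I_n) : s != [::] -> exists2 m, m \in s & forall x, x \in s -> (x <= m)%N.
Proof.
elim: s => [//|x s IH] _.
case: s IH => [|y s] IH.
- exists x; first by rewrite inE. by move=> z; rewrite inE => /eqP ->.
case: IH => // m ms Hm.
case: (leqP x m) => Hxm.
- exists m; first by rewrite inE ms orbT.
  move=> z; rewrite inE => /orP[/eqP -> //|]. exact: Hm.
- exists x; first by rewrite inE eqxx.
  move=> z; rewrite inE => /orP[/eqP -> //|/Hm H]. exact: leq_trans H (ltnW Hxm).
Qed.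

Lemma par_forest n (par : nat -> nat) : (forall v, 0 < v -> par v < v) ->
  forest (fun x y : 'I_n => enat par x y).
Proof.
move=> Hp; split; first split.
- by move=> x y; rewrite /enat orbC.
- move=> x; rewrite /enat orbb; apply/negP => /andP[x0 /eqP Hx].
  by move: (Hp x x0); rewrite Hx ltnn.
move=> s Hu Hs; apply/negP => Hc.
set E := (fun x y : 'I_n => enat par x y) in Hc.
have sn : s != [::] by case: s Hs {Hu Hc}.
case: (seq_max sn) => mx mxs Hm.
case/splitPr: mxs Hu Hs Hc Hm => p1 p2 Hu Hs Hc Hm.
have Hu' : uniq (mx :: p2 ++ p1).
  by rewrite -cat_cons -(rot_size_cat p1 (mx :: p2)) rot_uniq.
have Hc' : cycle E (mx :: p2 ++ p1).
  by rewrite -cat_cons -(rot_size_cat p1 (mx :: p2)) rot_cycle.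
have Hsz : 2 <= size (p2 ++ p1) by move: Hs; rewrite !size_cat /=; lia.
have Hin : forall x, x \in p2 ++ p1 -> x <= mx.
  move=> x; rewrite mem_cat => /orP[H|H]; apply: Hm; rewrite mem_cat ?inE H ?orbT //.
move: Hu' Hc' Hsz Hin; move: (p2 ++ p1) => w.
case: w => [|a [|c t]] //= Hu' Hc' _ Hin.
have Hlt : forall x, x \in a :: c :: t -> val x < val mx.
  move=> x xin; rewrite ltn_neqAle Hin // andbT.
  apply/negP => /eqP /val_inj xm. by move: Hu'; rewrite -xm xin.
move: Hc'; rewrite rcons_path => /and4P[Ea _ _ Ez].
set z := last c t in Ez.
have zin : z \in c :: t by apply: mem_last.
have az : a != z by apply/negP => /eqP az; move: Hu'; rewrite az zin /= andbF.
have Ha : par mx = a.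
  move: Ea; rewrite /E /enat => /orP[/andP[_ /eqP //]|/andP[a0 /eqP pa]].
  have := Hp _ a0; have := Hlt a (mem_head _ _); rewrite pa => H1 H2; have := ltn_trans H2 H1; by rewrite ltnn.
have Hz : par mx = z.
  move: Ez; rewrite /E /enat => /orP[/andP[z0 /eqP pz]|/andP[_ /eqP //]].
  have := Hp _ z0; have := Hlt z; rewrite inE zin orbT => /(_ isT); rewrite pz => H1 H2; have := ltn_trans H2 H1; by rewrite ltnn.
by move: az; rewrite -(inj_eq val_inj) /= -Ha -Hz eqxx.
Qed.


Section Constr.
Variables k b : nat.
Hypothesis k2 : 2 <= k.

Let k0 : 0 < k. Proof. by apply: leq_trans k2. Qed.

Definition cpar (v : nat) : nat :=
  if v.-1 %% k != 0 then v.-1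
  else if v.-1 %/ k == 0 then 0 else ((v.-1 %/ k).-1 %/ 2 + 1) * k.

Lemma cpar_lt v : 0 < v -> cpar v < v.
Proof.
move=> v0; rewrite /cpar.
case: ifP => _; first by rewrite prednK.
case: ifP => Hj //.
have H1 : (v.-1 %/ k).-1 %/ 2 + 1 <= v.-1 %/ k.
  have := leq_div (v.-1 %/ k).-1 2. move: Hj => /negbT. rewrite -lt0n. lia.
have H2 : v.-1 %/ k * k <= v.-1 by apply: leq_divM.
have H3 := leq_mul H1 (leqnn k). lia.
Qed.

Lemma div_succ v : ~~ (k %| v.+1) -> v.+1 %/ k = v %/ k.
Proof.
move=> Hd.
have Hr : (v %% k).+1 < k.
  have := ltn_pmod v k0. rewrite leq_eqVlt => /orP[/eqP H|//].
  have E : v.+1 = (v %/ k).+1 * k by rewrite mulSn addnC {1}(divn_eq v k) -addnS H.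
  by move: Hd; rewrite E dvdn_mull.
have E : v.+1 = v %/ k * k + (v %% k).+1 by rewrite addnS -divn_eq.
by rewrite E divnMDl // (divn_small Hr) addn0.
Qed.

Lemma cpar_succ v : ~~ (k %| v) -> cpar v.+1 = v.
Proof. by rewrite /cpar /= /dvdn => ->. Qed.

Lemma cpar_child i : cpar ((2 * i + 1) * k + 1) = (i + 1) * k /\ cpar ((2 * i + 2) * k + 1) = (i + 1) * k.
Proof.
rewrite /cpar !addn1 /= !modnMl !mulnK //= mulKn //; split => //.
have -> : (2 * i + 2).-1 %/ 2 = i.
  have -> : (2 * i + 2).-1 = i * 2 + 1 by rewrite mulnC addn2 addn1.
  by rewrite divnMDl // divn_small // addn0.
by rewrite addn2.
Qed.

Lemma cpar_nonmult u : 0 < u -> ~~ (k %| u) -> ~~ (k %| cpar u) -> cpar u = u.-1 /\ u %/ k = u.-1 %/ k.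
Proof.
move=> u0 Hu; rewrite /cpar; case: ifP => Hr.
- move=> Hd; split => //. case: u u0 Hu Hd Hr => // w _ Hu Hd Hr /=.
  exact: div_succ.
- case: ifP => _; first by rewrite dvdn0.
  by rewrite dvdn_mull.
Qed.


Definition N := k * (2 * b + 1).
Definition ce : rel 'I_N.+1 := fun x y => enat cpar x y.
Definition cP : {set 'I_N.+1} := [set v : 'I_N.+1 | (k %| v) && ((v == 0 :> nat) || ((b + 1) * k <= v))].

Lemma ce_forest : forest ce.
Proof. exact: (par_forest _ cpar_lt). Qed.

Lemma card3' (T : finType) (v w z : T) : v != w -> v != z -> w != z -> #|(v |: (w |: [set z]))| = 3.
Proof. move=> vw vz wz. by rewrite !cardsU1 cards1 !inE negb_or vw vz wz. Qed.

Lemma kN : k %| N.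
Proof. by rewrite /N dvdn_mulr. Qed.

Lemma deg_nonmult (x : 'I_N.+1) : ~~ (k %| x) -> 1 < deg ce x.
Proof.
move=> Hx.
have x0 : 0 < (x : nat) by case: (nat_of_ord x) Hx => //; rewrite dvdn0.
have xN : (x : nat) < N.
  have := ltn_ord x; rewrite ltnS leq_eqVlt => /orP[/eqP E|//].
  by move: Hx; rewrite E kN.
have Hc := cpar_lt x0.
set y1 : 'I_N.+1 := inord (cpar x).
set y2 : 'I_N.+1 := inord x.+1.
have v1 : (y1 : nat) = cpar x by rewrite /y1 inordK //; exact: ltn_trans Hc (ltn_ord x).
have v2 : (y2 : nat) = x.+1 by rewrite /y2 inordK.
have : #|[set y1; y2]| <= deg ce x.
  apply: subset_leq_card; apply/subsetP => y; rewrite !inE => /orP[]/eqP ->.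
  - by rewrite /ce /enat x0 v1 eqxx.
  - by rewrite /ce /enat v2 cpar_succ // eqxx orbT.
rewrite cards2.
have -> : y1 != y2 by rewrite -(inj_eq val_inj) /= v1 v2 neq_ltn (ltn_trans Hc).
done.
Qed.

Lemma deg_branch i : i < b -> 2 < deg ce (inord ((i + 1) * k)).
Proof.
move=> ib.
set x : 'I_N.+1 := inord ((i + 1) * k).
have Hx : (x : nat) = (i + 1) * k.
  rewrite /x inordK // ltnS /N mulnC leq_mul2l; apply/orP; right. lia.
have x0 : 0 < (x : nat) by rewrite Hx muln_gt0 k0 addn1.
have HkN : (2 * i + 2) * k + 1 <= N.
  rewrite /N. have : (2 * i + 2) * k <= (2 * b) * k by rewrite leq_mul2r; apply/orP; right; lia.
  have := k0. lia.
set y1 : 'I_N.+1 := inord (x.-1).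
set y2 : 'I_N.+1 := inord ((2 * i + 1) * k + 1).
set y3 : 'I_N.+1 := inord ((2 * i + 2) * k + 1).
have v1 : (y1 : nat) = x.-1 by rewrite /y1 inordK //; apply: leq_ltn_trans (leq_pred _) (ltn_ord x).
have v2 : (y2 : nat) = (2 * i + 1) * k + 1.
  rewrite /y2 inordK // ltnS; apply: leq_trans HkN; rewrite leq_add2r leq_mul2r; apply/orP; right; lia.
have v3 : (y3 : nat) = (2 * i + 2) * k + 1 by rewrite /y3 inordK // ltnS.
have nm : ~~ (k %| x.-1).
  apply/negP => H. have : k %| (x.-1).+1 by rewrite prednK // Hx dvdn_mull.
  rewrite -addn1 dvdn_addr // => /dvdn_leq. lia.
case: (cpar_child i) => C1 C2.
have : #|(y1 |: (y2 |: [set y3]))| <= deg ce x.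
  apply: subset_leq_card; apply/subsetP => y; rewrite !inE => /or3P[]/eqP ->.
  - have Cx : cpar x = x.-1 by have := cpar_succ nm; rewrite prednK.
    by rewrite /ce /enat v1 x0 Cx eqxx.
  - by rewrite /ce /enat v2 C1 Hx; apply/orP; right; rewrite eqxx andbT addn1.
  - by rewrite /ce /enat v3 C2 Hx; apply/orP; right; rewrite eqxx andbT addn1.
have l12 : x.-1 < (2 * i + 1) * k + 1.
  have : (i + 1) * k <= (2 * i + 1) * k by rewrite leq_mul2r; apply/orP; right; lia.
  rewrite -Hx. lia.
have l23 : (2 * i + 1) * k + 1 < (2 * i + 2) * k + 1.
  rewrite ltn_add2r ltn_mul2r k0 /=. lia.
rewrite card3' //; rewrite -(inj_eq val_inj) /= ?v1 ?v2 ?v3 neq_ltn ?l12 ?l23 //.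
by rewrite (ltn_trans l12 l23).
Qed.


Lemma special (x : 'I_N.+1) : x \notin cP -> k %| x -> 2 < deg ce x.
Proof.
move=> Hn Hk.
move: Hn; rewrite inE Hk /= negb_or -ltnNge => /andP[x0 xb].
set j := x %/ k.
have Hxj : (x : nat) = j * k by rewrite /j divnK.
have j0 : 0 < j by move: x0; rewrite Hxj muln_eq0 negb_or lt0n => /andP[].
have jb : j < b + 1 by move: xb; rewrite Hxj ltn_mul2r k0.
have -> : x = inord ((j.-1 + 1) * k).
  apply: val_inj; rewrite /= addn1 prednK // inordK -?Hxj //.
apply: deg_branch; lia.
Qed.

Lemma path_const (T : eqType) (r : rel T) (Q : pred T) (f : T -> nat) x s :
  (forall u v, Q u -> Q v -> r u v -> f u = f v) -> Q x -> all Q s -> path r x s ->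
  all (fun y => f y == f x) s.
Proof.
move=> H; elim: s x => [//|y s IH] x Qx /= /andP[Qy As] /andP[rxy Ps].
have Hy := H x y Qx Qy rxy.
rewrite Hy eqxx /=. exact: IH.
Qed.

Lemma edge_quot (u v : 'I_N.+1) : ~~ (k %| u) -> ~~ (k %| v) -> ce u v -> u %/ k = v %/ k.
Proof.
move=> Hu Hv; rewrite /ce /enat => /orP[/andP[u0 /eqP E]|/andP[v0 /eqP E]].
- have Hv' : ~~ (k %| cpar u) by rewrite E.
  case: (cpar_nonmult u0 Hu Hv') => E1 E2. by rewrite E2 -E1 E.
- have Hu' : ~~ (k %| cpar v) by rewrite E.
  case: (cpar_nonmult v0 Hv Hu') => E1 E2. by rewrite E2 -E1 E.
Qed.

Lemma cover : bkpvc ce k cP.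
Proof.
apply/andP; split.
- apply/forallP => x; apply/implyP => Hd. apply/negPn/negP => Hn.
  case: (boolP (k %| x)) => Hk.
  + have := special Hn Hk. lia.
  + have := deg_nonmult Hk. lia.
- apply/forallP => s; apply/implyP => /andP[Hu Hs]; apply/negPn/negP => /hasPn Hh.
  have Hnm : forall v, v \in s -> ~~ (k %| v).
    move=> v vs; apply/negP => Hk. have := Hh v vs; rewrite negb_or => /andP[Hd Hn].
    by move: (special Hn Hk); rewrite (negbTE Hd).
  have Hsz := size_tuple s.
  have Hall0 : all (fun v : 'I_N.+1 => ~~ (k %| v)) (tval s) by apply/allP => v vs; apply: Hnm.
  move: Hu Hs Hall0 Hsz; case: (tval s) => [|x t] Hu Hs Hall0 Hsz; first by move: Hsz k0 => /= <-.
  clear Hnm; have Hnm : forall v, v \in x :: t -> ~~ (k %| v) by move/allP: Hall0.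
  move: Hall0 => /= /andP[Hx Hall].
  have Hq := @path_const _ ce (fun v : 'I_N.+1 => ~~ (k %| v)) (fun v => v %/ k) x t
    edge_quot Hx Hall Hs.
  have Hq' : forall v, v \in x :: t -> v %/ k = x %/ k.
    move=> v; rewrite inE => /orP[/eqP -> //|vt]. by move: Hq => /allP /(_ v vt) /eqP.
  have Hmu : uniq [seq nat_of_ord v %% k | v <- x :: t].
    rewrite map_inj_in_uniq // => u v us vs Em.
    apply: val_inj; rewrite /= (divn_eq u k) (divn_eq v k) Em (Hq' u us) (Hq' v vs) //.
  have Hsub : {subset [seq nat_of_ord v %% k | v <- x :: t] <= iota 1 k.-1}.
    move=> m /mapP[v vs ->]; rewrite mem_iota.
    have := Hnm v vs; rewrite /dvdn lt0n => ->. have := ltn_pmod v k0. lia.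
  have := uniq_leq_size Hmu Hsub; rewrite size_map size_iota Hsz. lia.
Qed.

Lemma cP_card : #|cP| <= b + 2.
Proof.
pose f := fun i : 'I_(b + 2) => (inord (if (i : nat) == 0 then 0 else (b + i) * k) : 'I_N.+1).
have : cP \subset f @: [set: 'I_(b + 2)].
  apply/subsetP => x; rewrite inE => /andP[Hk /orP[/eqP x0|xb]].
  - apply/imsetP; have h0 : 0 < b + 2 by rewrite addn2.
    exists (Ordinal h0); first by rewrite inE.
    by apply: val_inj; rewrite /f /= inordK.
  - set j := x %/ k.
    have Hxj : (x : nat) = j * k by rewrite /j divnK.
    have jb : b + 1 <= j by move: xb; rewrite Hxj leq_mul2r => /orP[/eqP k00|//]; by move: k0; rewrite k00.
    have jN : j <= 2 * b + 1.
      have := ltn_ord x; rewrite ltnS Hxj /N mulnC leq_mul2l => /orP[/eqP k00|//]; by move: k0; rewrite k00.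
    have Hi : j - b < b + 2 by lia.
    apply/imsetP; exists (Ordinal Hi); first by rewrite inE.
    apply: val_inj; rewrite /f /=.
    have -> : (j - b == 0) = false by apply/negbTE; lia.
    have -> : b + (j - b) = j by lia.
    by rewrite inordK -Hxj.
move/subset_leq_card => H. apply: leq_trans H _.
by apply: leq_trans (leq_imset_card _ _) _; rewrite cardsT card_ord.
Qed.

End Constr.

Theorem theorem2 :
  (forall (T : finType) (e : rel T) (k : nat),
      forest e -> 2 <= #|T| -> 2 <= k ->
      #|T| + 3 * k - 1 <= 2 * k * psi_b e k)
  /\
  (forall n k : nat, 2 <= n -> 2 <= k -> (2 * k %| n + 3 * k - 1) ->
      exists e : rel 'I_n, forest e /\ psi_b e k = (n + 3 * k - 1) %/ (2 * k)).
Proof.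
split; first exact: part1.
move=> n k n2 k2 Hd.
have k0 : 0 < k by apply: leq_trans k2.
have [b En Eq] : exists2 b, n = (k * (2 * b + 1)).+1 & (n + 3 * k - 1) %/ (2 * k) = b + 2.
  case/dvdnP: Hd => q Hq.
  have q2 : 2 <= q.
    rewrite leqNgt; apply/negP => hq.
    have : q * (2 * k) <= 1 * (2 * k) by apply: leq_mul => //; lia.
    lia.
  have [c Ec] : exists c, q = c + 2 by exists (q - 2); lia.
  exists c; last by rewrite Hq -Ec mulnK // muln_gt0 k0.
  rewrite Ec in Hq. nia.
rewrite Eq; subst n.
exists (@ce k b); split; first exact: (@ce_forest k b k2).
apply/eqP; rewrite eqn_leq; apply/andP; split.
- have [_ Hmin] := psi_spec (@ce k b) k0.
  exact: leq_trans (Hmin _ (@cover k b k2)) (@cP_card k b k2).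
- have H := part1 (@ce_forest k b k2) _ k2.
  rewrite card_ord in H.
  have H2 : 2 <= (k * (2 * b + 1)).+1.
    rewrite ltnS muln_gt0 k0 /=. lia.
  have {}H := H H2.
  have E : (k * (2 * b + 1)).+1 + 3 * k - 1 = (b + 2) * (2 * k).
    rewrite mulnDl mulnDr muln1. lia.
  rewrite E mulnC leq_pmul2l in H => //. by rewrite muln_gt0 k0.
Qed.
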